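(* Let $\ell$ be an odd prime. Then, as $T\to\infty$, $$|S^1(\ell,T)| \ll T,$$ where the implied constant may depend on $\ell$.
   Context: $\Phi_\ell(X)$ denotes the $\ell$-th cyclotomic polynomial. For a natural number $n$, $R_\ell(n):=\min\{d\in\mathbb{N}: n\mid \Phi_\ell(d)\}$ if such $d$ exists, and $R_\ell(n)=\infty$ otherwise. $\mathbb{P}$ denotes the set of primes $p$ that divide $\Phi_\ell(d)$ for some $d\in\mathbb{N}$. For a positive integer $i$ and real $T$, $S^i(\ell,T):=\{p\in\mathbb{P}: R_\ell(p^i)\le T\}$. *)

(* Defs.v *)
From mathcomp Require Import all_boot all_order all_algebra all_field.
Set Implicit Arguments. Unset Strict Implicit. Unset Printing Implicit Defensive.
Import Order.TTheory GRing.Theory Num.Theory.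
Local Open Scope ring_scope.

Definition divPhi (l n d : nat) : Prop := (n%:Z %| ('Phi_l).[d%:Z])%Z.

Definition is_R (l n d : nat) : Prop :=
  (0 < d)%N /\ divPhi l n d /\ forall d', (0 < d')%N -> divPhi l n d' -> (d <= d')%N.

Definition inP (l p : nat) : Prop := prime p /\ exists d, (0 < d)%N /\ divPhi l p d.

(* S^i(l,T) = { p in P : R_l(p^i) <= T } (R_l(p^i) = infinity never satisfies <= T). *)
Definition inS (i l : nat) (T : rat) (p : nat) : Prop :=
  inP l p /\ exists d, is_R l (p ^ i) d /\ (d%:R <= T).

(* Main.v *)
Require Import Defs.
From mathcomp Require Import all_boot all_order all_algebra all_field.
Import Order.TTheory GRing.Theory Num.Theory.
Local Open Scope ring_scope.

Lemma Phi1 : 'Phi_1 = 'X - 1.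
Proof. by have := prod_Cyclotomic (isT : (0 < 1)%N); rewrite big_seq1 expr1. Qed.

Lemma Phi_prime l : prime l -> 'Phi_l = \sum_(i < l) 'X^i.
Proof.
move=> pl; have l0 := prime_gt0 pl.
have := prod_Cyclotomic l0.
have -> : divisors l = [:: 1%N; l].
  apply: (sorted_eq (@leq_trans) (@anti_leq)); first exact: sorted_divisors.
    by rewrite /= andbT prime_gt0.
  apply: uniq_perm; first exact: divisors_uniq.
    by rewrite /= inE andbT eq_sym; case: l pl {l0} => [|[|]].
  move=> d; rewrite -dvdn_divisors // !inE.
  apply/idP/idP; first by move/(prime_nt_dvdP pl) => H; case: eqP => //= /eqP ?; apply/eqP/H.
  by case/orP=> /eqP->; rewrite ?dvd1n ?dvdnn.
rewrite big_cons big_seq1 Phi1 subrX1 => /mulfI; apply.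
by rewrite monic_neq0 // monicXsubC.
Qed.

Lemma Phi_eval l d : prime l -> ('Phi_l).[d%:Z] = (\sum_(i < l) d ^ i)%N%:Z.
Proof.
move=> pl; rewrite Phi_prime // horner_sum.
transitivity ((\sum_(i < l) d ^ i)%N%:R : int); last by rewrite natz.
rewrite natr_sum; apply: eq_bigr => i _; by rewrite hornerXn natrX natz.
Qed.

Definition NN (l d : nat) : nat := (\sum_(i < l) d ^ i)%N.

Lemma divPhiNN l n d : prime l -> divPhi l n d <-> (n %| NN l d)%N.
Proof. by move=> pl; rewrite /divPhi Phi_eval. Qed.

Lemma NN_mod l d p : NN l d = NN l (d %% p) %[mod p].
Proof.
rewrite /NN; elim: l => [|m IH]; first by rewrite !big_ord0.
by rewrite !big_ord_recr /= -modnDm IH -modnXm modnDm.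
Qed.

Lemma NN0 l : (0 < l)%N -> NN l 0 = 1%N.
Proof.
case: l => // l _; rewrite /NN big_ord_recl /= expn0 big1 // => i _.
by rewrite exp0n.
Qed.

Lemma NN_le l d : (0 < d)%N -> (NN l d <= d.+1 ^ l)%N.
Proof.
move=> d0; rewrite /NN; elim: l => [|m IH]; first by rewrite big_ord0.
rewrite big_ord_recr /= expnS.
have h : (d ^ m <= d.+1 ^ m)%N.
  case: (m) => [|k]; first done. rewrite leq_exp2r //.

apply: (leq_trans (leq_add IH h)).
by rewrite addnn -mul2n leq_mul2r ltnS d0 orbT.
Qed.

Lemma R_lt l p d : prime l -> prime p -> is_R l p d -> (d < p)%N.
Proof.
move=> pl pp [d0 [hd hmin]]; rewrite ltnNge; apply/negP => hpd.
move/(divPhiNN _ _ _ pl): hd => hd.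
have hd' : (p %| NN l (d %% p))%N.
  by rewrite /dvdn -NN_mod.
have [z|nz] := posnP (d %% p).
  move: hd'; rewrite z NN0 ?prime_gt0 // dvdn1 => /eqP p1.
  by move: pp; rewrite p1.
have := hmin _ nz ((divPhiNN _ _ _ pl).2 hd').
have := ltn_pmod d (prime_gt0 pp).
move=> a b; have := leq_ltn_trans b a.
by rewrite ltnNge hpd.
Qed.

Lemma notdvd q t : prime q -> q \notin t -> (forall p, p \in t -> prime p) ->
  ~~ (q %| \prod_(p <- t) p)%N.
Proof.
move=> pq; elim: t => [|r t IH]; first by rewrite big_nil dvdn1; case: eqP pq => // ->.
rewrite inE negb_or => /andP [qr qt] h; rewrite big_cons Euclid_dvdM // negb_or.
rewrite dvdn_prime2 ?qr ?IH //; first by move=> p pt; apply: h; rewrite inE pt orbT.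
by apply: h; rewrite mem_head.
Qed.

Lemma prod_primes t N : uniq t -> (forall p, p \in t -> prime p /\ (p %| N)%N) ->
  (\prod_(p <- t) p %| N)%N.
Proof.
elim: t => [|q t IH]; first by rewrite big_nil dvd1n.
rewrite /= => /andP [qt ut] h; rewrite big_cons.
have [pq dq] := h q (mem_head _ _).
have h' : forall p, p \in t -> prime p /\ (p %| N)%N by move=> p pt; apply: h; rewrite inE pt orbT.
rewrite Gauss_dvd ?dq ?IH //.
by rewrite prime_coprime // notdvd // => p /h' [].
Qed.

Lemma prod_ge t d : (forall p, p \in t -> d < p)%N -> (d.+1 ^ size t <= \prod_(p <- t) p)%N.
Proof.
elim: t => [|q t IH] h; first by rewrite big_nil.
rewrite big_cons /= expnS leq_mul ?h ?mem_head ?IH // => p pt.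
by apply: h; rewrite inE pt orbT.
Qed.

Lemma count_d l d t : (0 < l)%N -> (0 < d)%N -> uniq t ->
  (forall p, p \in t -> [&& prime p, d < p & p %| NN l d]%N) -> (size t <= l)%N.
Proof.
move=> l0 d0 ut h.
have hd : (\prod_(p <- t) p %| NN l d)%N.
  apply: prod_primes => // p /h /and3P [? _ ?]; done.
have N0 : (0 < NN l d)%N.
  by rewrite /NN; case: (l) l0 => [|k] // _; rewrite big_ord_recl expn0 addnC addn1.
have := leq_trans (@prod_ge t d _) (leq_trans (dvdn_leq N0 hd) (@NN_le l d d0)).
rewrite leq_exp2l ?ltnS //; apply.
by move=> p /h /and3P [].
Qed.

Lemma size_flat (f : nat -> seq nat) a n k :
  (forall d, d \in iota a n -> (size (f d) <= k)%N) ->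
  (size (flatten [seq f d | d <- iota a n]) <= n * k)%N.
Proof.
elim: n a => [|n IH] a h //=.
rewrite size_cat mulSn leq_add ?h ?mem_head // IH // => d dI.
by apply: h; rewrite inE dI orbT.
Qed.

Theorem theorem1 (l : nat) (hl : prime l) (hodd : odd l) :
  exists C : rat, 0 < C /\ exists T0 : rat, forall T : rat, T0 <= T ->
    forall s : seq nat, uniq s -> (forall p, p \in s -> inS 1 l T p) ->
      (size s)%:R <= C * T.
Proof.
have l0 := prime_gt0 hl.
exists l%:R; split; first by rewrite ltr0n.
exists 1 => T T1 s us hs.
have T0 : 0 <= T by apply: le_trans T1.
set n := Num.trunc T.
pose P d := fun p => [&& prime p, d < p & p %| NN l d]%N.
have sub : {subset s <= flatten [seq filter (P d) s | d <- iota 1 n]}.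
  move=> p ps; have [[pp _] [d [hR hT]]] := hs p ps.
  rewrite expn1 in hR; apply/flatten_mapP; exists d.
    rewrite mem_iota hR.1 /= add1n ltnS /n truncn_ge_nat //.
  rewrite mem_filter ps andbT /P pp (R_lt _ _ _ hl pp hR) /=.
  exact/(divPhiNN _ _ _ hl)/hR.2.1.
have hs1 := uniq_leq_size us sub.
have hs2 : (size s <= n * l)%N.
  apply: (leq_trans hs1); apply: size_flat => d; rewrite mem_iota => /andP [d1 _].
  apply: (@count_d l d) => //; first exact: filter_uniq.
  by move=> p; rewrite mem_filter => /andP [hp _].
have e : (size s)%:R <= ((n * l)%N%:R : rat) by rewrite ler_nat.
apply: (le_trans e).
rewrite natrM mulrC ler_wpM2l // truncn_le //.
Qed.
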